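(* Let $G(\pi_i,\pi_i')=\frac12\|\pi_i-\pi_i'\|^2$ and $\mu>0$. Let $K\ge1$, $c>1$, and $$T_\sigma\ge\max\Big(\frac{3}{\ln c}\ln K+\frac{\ln 64}{\ln c},\,1\Big).$$ Let $\sigma^0,\sigma^1,\dots,\sigma^K\in\mathcal X$ satisfy $$\|\pi^{\mu,\sigma^k}-\sigma^{k+1}\|\le\|\pi^{\mu,\sigma^k}-\sigma^k\|\,c^{-T_\sigma}\quad\text{for } k=0,\dots,K-1.$$ Assume $\sqrt{\sum_{i=1}^N\|\nabla_{\pi_i}v_i(\pi)\|^2}\le\zeta$ for all $\pi\in\mathcal X$. Then for any Nash equilibrium $\pi^*\in\Pi^*$, $$\mathrm{exploit}(\sigma^K)\le\frac{2\sqrt2\big((\mu+L)\,\mathrm{diam}(\mathcal X)+\zeta\big)}{\sqrt K}\sqrt{\|\pi^*-\sigma^0\|\Big(8\|\pi^*-\sigma^0\|+\frac\zeta\mu\Big)}.$$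
   Context: Game. Let $N\ge1$. For each $i\in[N]$, $\mathcal X_i\subseteq\mathbb R^{d_i}$ is a nonempty compact convex set, and $\mathcal X=\prod_i\mathcal X_i$. Each $v_i:\mathcal X\to\mathbb R$ is differentiable, with block gradient $\nabla_{\pi_i}v_i$. The norm is Euclidean, with $\|\pi\|^2=\sum_i\|\pi_i\|^2$. The game is monotone: $\sum_i\langle\nabla_{\pi_i}v_i(\pi)-\nabla_{\pi_i}v_i(\pi'),\pi_i-\pi_i'\rangle\le0$ for all $\pi,\pi'$. The game is $L$-smooth: $\sum_i\|\nabla_{\pi_i}v_i(\pi)-\nabla_{\pi_i}v_i(\pi')\|^2\le L^2\|\pi-\pi'\|^2$. A Nash equilibrium is a $\pi^*\in\mathcal X$ with $v_i(\pi^* )\ge v_i(\pi_i,\pi^*_{-i})$ for all $i$ and $\pi_i\in\mathcal X_i$. $\Pi^*$ is the set of Nash equilibria. Exploitability and diameter: $\mathrm{exploit}(\pi)=\sum_i(\max_{\tilde\pi_i\in\mathcal X_i}v_i(\tilde\pi_i,\pi_{-i})-v_i(\pi))$ and $\mathrm{diam}(\mathcal X)=\sup_{\pi,\pi'\in\mathcal X}\|\pi-\pi'\|$. Perturbed equilibrium. For $\mu>0$ and $\sigma\in\mathcal X$, $\pi^{\mu,\sigma}$ is the (unique) profile with $\pi_i^{\mu,\sigma}\in\arg\max_{\pi_i\in\mathcal X_i}\{v_i(\pi_i,\pi^{\mu,\sigma}_{-i})-\mu G(\pi_i,\sigma_i)\}$ for all $i$. *)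

(* Defs.v *)
From HB Require Import structures.
From mathcomp Require Import all_boot all_order all_algebra.
From mathcomp Require Import all_classical all_reals all_analysis.
From mathcomp Require Import matrix_topology matrix_normedtype convex.
Set Implicit Arguments. Unset Strict Implicit. Unset Printing Implicit Defensive.
Import Order.TTheory GRing.Theory Num.Theory.
Import numFieldNormedType.Exports.
Local Open Scope classical_set_scope.
Local Open Scope ring_scope.

Section Game.
Variables (R : realType) (N : nat) (d : 'I_N -> nat).

Definition strat (i : 'I_N) := 'rV[R]_(d i).
Definition profile := forall i : 'I_N, strat i.

Definition sdot (i : 'I_N) (x y : strat i) : R := \sum_(j < d i) x 0 j * y 0 j.
Definition snorm (i : 'I_N) (x : strat i) : R := Num.sqrt (sdot x x).

Definition pdot (p q : profile) : R := \sum_(i < N) sdot (p i) (q i).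
Definition pnorm (p : profile) : R := Num.sqrt (pdot p p).
Definition psub (p q : profile) : profile := fun i => p i - q i.

Definition upd (p : profile) (i : 'I_N) (x : strat i) : profile :=
  @dfwith _ strat p i x.

Definition Gdist (i : 'I_N) (x y : strat i) : R := 2^-1 * (snorm (x - y)) ^+ 2.

Variable Xs : forall i : 'I_N, set (strat i).
Arguments Xs : clear implicits.

Definition inX (p : profile) : Prop := forall i, Xs i (p i).

Definition strategy_sets_ok : Prop :=
  forall i, Xs i !=set0 /\ compact (Xs i : set 'rV[R]_(d i)) /\
            convex_set (Xs i : set (convex_lmodType 'rV[R]_(d i))).

Variable v : 'I_N -> profile -> R.

(* The block gradient nabla_{pi_i} v_i(p) is  gradv i p i. *)
Definition is_gradient (gradv : 'I_N -> profile -> profile) : Prop :=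
  forall i p, inX p -> forall eps : R, 0 < eps -> exists2 delta : R, 0 < delta &
    forall q, inX q -> pnorm (psub q p) < delta ->
      `| v i q - v i p - pdot (gradv i p) (psub q p) | <= eps * pnorm (psub q p).

Definition monotone_game (gradv : 'I_N -> profile -> profile) : Prop :=
  forall p q, inX p -> inX q ->
    \sum_(i < N) sdot (gradv i p i - gradv i q i) (p i - q i) <= 0.

Definition smooth_game (L : R) (gradv : 'I_N -> profile -> profile) : Prop :=
  forall p q, inX p -> inX q ->
    \sum_(i < N) (snorm (gradv i p i - gradv i q i)) ^+ 2
      <= L ^+ 2 * (pnorm (psub p q)) ^+ 2.

Definition nash_eq (p : profile) : Prop :=
  inX p /\ forall i (x : strat i), Xs i x -> v i (upd p x) <= v i p.

(* exploit(pi) = sum_i (max_{x in X_i} v_i(x, pi_{-i}) - v_i(pi))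
   (the max exists by compactness and continuity; we write it as sup) *)
Definition exploit (p : profile) : R :=
  \sum_(i < N) (sup [set v i (upd p x) | x in Xs i] - v i p).

Definition diamX : R :=
  sup [set pnorm (psub pq.1 pq.2) | pq in [set pq : profile * profile | inX pq.1 /\ inX pq.2]].

Definition perturbed_eq (mu : R) (sigma p : profile) : Prop :=
  inX p /\ forall i (x : strat i), Xs i x ->
    v i (upd p x) - mu * Gdist x (sigma i) <= v i p - mu * Gdist (p i) (sigma i).

End Game.

(* Main.v *)
Require Import Defs.
From HB Require Import structures.
From mathcomp Require Import all_boot all_order all_algebra.
From mathcomp Require Import all_classical all_reals all_analysis.
From mathcomp Require Import matrix_topology matrix_normedtype convex.
From mathcomp Require Import ring lra zify.
Import Order.TTheory GRing.Theory Num.Theory.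
Import numFieldNormedType.Exports.
Local Open Scope classical_set_scope.
Local Open Scope ring_scope.

Module Helpers.
Set Implicit Arguments. Unset Strict Implicit. Unset Printing Implicit Defensive.

Section Alg.
Variables (R : realType) (N : nat) (d : 'I_N -> nat).
Local Notation profile := (profile R d).

Definition padd (p q : profile) : profile := fun i => p i + q i.
Definition pscale (a : R) (p : profile) : profile := fun i => a *: p i.

Lemma sdot_sym i (x y : strat R d i) : sdot x y = sdot y x.
Proof. by apply: eq_bigr => j _; rewrite mulrC. Qed.
Lemma sdotDl i (x y z : strat R d i) : sdot (x + y) z = sdot x z + sdot y z.
Proof. by rewrite /sdot -big_split; apply: eq_bigr => j _; rewrite mxE mulrDl. Qed.
Lemma sdotBl i (x y z : strat R d i) : sdot (x - y) z = sdot x z - sdot y z.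
Proof. by rewrite /sdot -sumrB; apply: eq_bigr => j _; rewrite !mxE mulrBl. Qed.
Lemma sdotZl i a (x z : strat R d i) : sdot (a *: x) z = a * sdot x z.
Proof. by rewrite /sdot mulr_sumr; apply: eq_bigr => j _; rewrite mxE mulrA. Qed.
Lemma sdot_ge0 i (x : strat R d i) : 0 <= sdot x x.
Proof. by apply: sumr_ge0 => j _; rewrite -expr2 sqr_ge0. Qed.
Lemma sdot0l i (z : strat R d i) : sdot 0 z = 0.
Proof. by rewrite /sdot big1 // => j _; rewrite mxE mul0r. Qed.

Lemma pdot_sym (p q : profile) : pdot p q = pdot q p.
Proof. by apply: eq_bigr => i _; rewrite sdot_sym. Qed.
Lemma pdotDl (p q r : profile) : pdot (padd p q) r = pdot p r + pdot q r.
Proof. by rewrite /pdot -big_split; apply: eq_bigr => i _; rewrite sdotDl. Qed.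
Lemma pdotBl (p q r : profile) : pdot (psub p q) r = pdot p r - pdot q r.
Proof. by rewrite /pdot -sumrB; apply: eq_bigr => i _; rewrite sdotBl. Qed.
Lemma pdotZl a (p r : profile) : pdot (pscale a p) r = a * pdot p r.
Proof. by rewrite /pdot mulr_sumr; apply: eq_bigr => i _; rewrite sdotZl. Qed.
Lemma pdotDr (p q r : profile) : pdot r (padd p q) = pdot r p + pdot r q.
Proof. by rewrite pdot_sym pdotDl !(pdot_sym r). Qed.
Lemma pdotBr (p q r : profile) : pdot r (psub p q) = pdot r p - pdot r q.
Proof. by rewrite pdot_sym pdotBl !(pdot_sym r). Qed.
Lemma pdotZr a (p r : profile) : pdot r (pscale a p) = a * pdot r p.
Proof. by rewrite pdot_sym pdotZl !(pdot_sym r). Qed.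
Lemma pdot_ge0 (p : profile) : 0 <= pdot p p.
Proof. by apply: sumr_ge0 => i _; apply: sdot_ge0. Qed.
Lemma pnorm_ge0 (p : profile) : 0 <= pnorm p.
Proof. exact: sqrtr_ge0. Qed.
Lemma pnorm_sq (p : profile) : pnorm p ^+ 2 = pdot p p.
Proof. by rewrite sqr_sqrtr // pdot_ge0. Qed.

Lemma pdot_psub2 (p q : profile) : pdot (psub p q) (psub p q) = pdot p p - 2 * pdot p q + pdot q q.
Proof. rewrite !pdotBl !pdotBr (pdot_sym q p); ring. Qed.

Lemma CS (p q : profile) : pdot p q <= pnorm p * pnorm q.
Proof.
set a := pnorm p; set b := pnorm q.
have ha : pdot p p = a ^+ 2 by rewrite pnorm_sq.
have hb : pdot q q = b ^+ 2 by rewrite pnorm_sq.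
have a0 : 0 <= a by apply: pnorm_ge0.
have b0 : 0 <= b by apply: pnorm_ge0.
have key : forall s t : R, 0 <= s ^+ 2 * a ^+ 2 - 2 * s * t * pdot p q + t ^+ 2 * b ^+ 2.
  move=> s t; have := pdot_ge0 (psub (pscale s p) (pscale t q)).
  rewrite pdot_psub2 !pdotZl !pdotZr ha hb; lra.
have [ab0|] := ltP 0 (a * b).
  have := key b a; nra.
rewrite le_eqVlt => /orP [/eqP ab0|]; last by move=> h; have := mulr_ge0 a0 b0; lra.
rewrite ab0; case: (ltP 0 (pdot p q)) => // pq0.
have [a00|a00] : a = 0 \/ b = 0.
  by move/eqP: ab0; rewrite mulf_eq0 => /orP [/eqP|/eqP]; [left|right].
- have := key ((b ^+ 2 + 1) / pdot p q) 1; rewrite a00.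
  have -> : 2 * ((b ^+ 2 + 1) / pdot p q) * 1 * pdot p q = 2 * (b ^+ 2 + 1).
    by field; rewrite gt_eqF.
  nra.
- have := key 1 ((a ^+ 2 + 1) / pdot p q); rewrite a00.
  have -> : 2 * 1 * ((a ^+ 2 + 1) / pdot p q) * pdot p q = 2 * (a ^+ 2 + 1).
    by field; rewrite gt_eqF.
  nra.
Qed.
End Alg.


Section OneDim.
Variable R : realType.
Variables (f phi : R -> R).
Hypothesis Hfr : forall t : R, 0 <= t -> t <= 1 -> forall e : R, 0 < e -> exists2 dl : R, 0 < dl &
  forall s : R, 0 <= s -> s <= 1 -> `|s - t| < dl -> `|f s - f t - (s - t) * phi t| <= e * `|s - t|.

Lemma der_int (t : R) : 0 < t -> t < 1 -> is_derive t 1 f (phi t).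
Proof.
move=> t0 t1.
have H : (fun h : R => h^-1 *: ((f \o shift t) (h *: 1) - f t)) @ 0^' --> phi t.
  apply/cvgrPdist_le => e e0.
  have [dl dl0 Hd] := @Hfr t (ltW t0) (ltW t1) e e0.
  rewrite near_withinE; apply/nbhs_ballP.
  exists (Num.min dl (Num.min t (1 - t))).
    by rewrite /= !lt_min dl0 t0 subr_gt0 t1.
  move=> h /=; rewrite /ball /= sub0r normrN !lt_min => /and3P [hd ht h1t] h0.
  have := Hd (h + t); rewrite addrK.
  have hab : `|h| < t -> 0 <= h + t by move=> _; have := ler_norm (- h); rewrite normrN; lra.
  have hab2 : h + t <= 1 by have := ler_norm h; lra.
  move=> /(_ (hab ht) hab2 hd) Hh.
  have -> : h%:A = h by rewrite /GRing.scale /= mulr1.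
  have hn0 : `|h| != 0 by rewrite normr_eq0.
  rewrite -(@ler_pM2l _ `|h|) ?normr_gt0 //.
  rewrite -normrM mulrBr /GRing.scale /= mulrA mulfV // mul1r.
  have -> : h * phi t - (f (h + t) - f t) = - (f (h + t) - f t - h * phi t) by ring.
  by rewrite normrN [`|h| * e]mulrC.
apply: DeriveDef; first exact: cvgP H.
exact: cvg_lim H.
Qed.

Hypothesis Hmono : forall t s : R, 0 <= t -> t <= s -> s <= 1 -> phi s <= phi t.

Lemma onedim : f 1 - f 0 <= phi 0.
Proof.
apply/ler_addgt0Pr => e e0.
have [d0 d00 H0] := @Hfr 0 (lexx 0) ler01 e e0.
have [d1 d10 H1] := @Hfr 1 ler01 (lexx 1) e e0.
pose a := Num.min (d0 / 2) (1 / 4).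
pose b := 1 - Num.min (d1 / 2) (1 / 4).
have a0 : 0 < a by rewrite lt_min; apply/andP; split; lra.
have a1 : a <= 1 / 4 by rewrite ge_min; apply/orP; right.
have ad : a < d0 by rewrite gt_min; apply/orP; left; lra.
have b0 : 3 / 4 <= b.
  have : Num.min (d1 / 2) (1 / 4) <= 1 / 4 by rewrite ge_min; apply/orP; right.
  rewrite /b; lra.
have b1 : 0 < 1 - b.
  have : 0 < Num.min (d1 / 2) (1 / 4) by rewrite lt_min; apply/andP; split; lra.
  rewrite /b; lra.
have bd : 1 - b < d1.
  rewrite /b; have : Num.min (d1 / 2) (1 / 4) <= d1 / 2 by rewrite ge_min; apply/orP; left.
  lra.
clearbody a b.
have Ha : `|f a - f 0 - (a - 0) * phi 0| <= e * `|a - 0|.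
  apply: H0; rewrite ?subr0 ?gtr0_norm //; lra.
have Hb : `|f b - f 1 - (b - 1) * phi 1| <= e * `|b - 1|.
  apply: H1; [lra | lra | rewrite distrC gtr0_norm //].
rewrite subr0 (gtr0_norm a0) in Ha.
have Hb1 : `|b - 1| = 1 - b by rewrite distrC gtr0_norm.
rewrite Hb1 in Hb.
have Ha' := le_trans (ler_norm _) Ha.
have Hb' : - (f b - f 1 - (b - 1) * phi 1) <= e * (1 - b).
  by apply: le_trans Hb; rewrite -normrN; apply: ler_norm.
have altb : a < b by lra.
have dab : forall x, x \in `[a, b] -> is_derive x 1 f (phi x).
  move=> x; rewrite in_itv /= => /andP [xa xb]; apply: der_int; lra.
have dab' : {in `[a, b], forall x, derivable f x 1} by move=> x /dab [].
have [c cab Hc] := @MVT R f phi a b altb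
  (fun x xab => dab x (subset_itv_oo_cc xab))
  (derivable_within_continuous dab').
have cpos : 0 <= c /\ c <= 1.
  by move: cab; rewrite in_itv /= => /andP [ca cb]; split; lra.
have p1 : phi 1 <= phi 0 by apply: Hmono; lra.
have pc : phi c <= phi 0 by apply: Hmono; lra.
have : phi c * (b - a) <= phi 0 * (b - a) by rewrite ler_pM2r ?subr_gt0.
have : phi 1 * (1 - b) <= phi 0 * (1 - b) by rewrite ler_pM2r.
have : e * a + e * (1 - b) <= e by nra.
lra.
Qed.
End OneDim.


Section G1.
Variables (R : realType) (N : nat) (d : 'I_N -> nat).
Local Notation profile := (profile R d).
Local Notation strat := (strat R d).

Lemma upd_in (p : profile) i (x : strat i) : upd p x i = x.
Proof. exact: dfwith_in. Qed.
Lemma upd_out (p : profile) i (x : strat i) j : i != j -> upd p x j = p j.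
Proof. exact: dfwith_out. Qed.
Lemma sdot0r i (z : strat i) : sdot z 0 = 0.
Proof. by rewrite sdot_sym sdot0l. Qed.

Lemma sum_upd (F : forall j, strat j -> R) (F0 : forall j, F j 0 = 0)
  (p q : profile) i (x : strat i) :
  (forall j, i != j -> q j = p j) ->
  \sum_(j < N) F j (upd p x j - q j) = F i (x - q i).
Proof.
move=> hq; rewrite (bigD1 i) //= upd_in big1 ?addr0 // => j ji.
have ij : i != j by rewrite eq_sym.
by rewrite upd_out // hq // subrr F0.
Qed.

Lemma pdot_upd (r p q : profile) i (x : strat i) :
  (forall j, i != j -> q j = p j) ->
  pdot r (psub (upd p x) q) = sdot (r i) (x - q i).
Proof. move=> hq; rewrite /pdot /psub; exact: (@sum_upd (fun j z => sdot (r j) z) (fun j => sdot0r (r j)) p q i x hq). Qed.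

Lemma pdot_upd2 (p q : profile) i (x : strat i) :
  (forall j, i != j -> q j = p j) ->
  pdot (psub (upd p x) q) (psub (upd p x) q) = sdot (x - q i) (x - q i).
Proof. move=> hq; rewrite /pdot /psub; exact: (@sum_upd (fun j z => sdot z z) (fun j => sdot0l 0) p q i x hq). Qed.

Lemma upd_id (p : profile) i : upd p (p i) = p.
Proof.
apply: functional_extensionality_dep => j.
by case: (eqVneq i j) => [<-|ij]; [rewrite upd_in | rewrite upd_out].
Qed.

Variable Xs : forall i : 'I_N, set (strat i).
Arguments Xs : clear implicits.

Lemma inX_upd (p : profile) i (x : strat i) : inX Xs p -> Xs i x -> inX Xs (upd p x).
Proof.
move=> hp hx j; case: (eqVneq i j) => [<-|ij]; first by rewrite upd_in.
by rewrite upd_out.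
Qed.

Lemma seg_in i (x y : strat i) (t : R) :
  convex_set (Xs i : set (convex_lmodType 'rV[R]_(d i))) ->
  Xs i x -> Xs i y -> 0 <= t -> t <= 1 -> Xs i (y + t *: (x - y)).
Proof.
move=> hc hx hy t0 t1.
have := hc x y (Itv01 t0 t1) (mem_set hx) (mem_set hy).
rewrite inE /=.
have -> : y + t *: (x - y) = conv (Itv01 t0 t1) (x : convex_lmodType 'rV[R]_(d i)) y.
  by rewrite /conv /= /unstable.onem scalerBl scale1r scalerBr addrCA.
by [].
Qed.

Lemma sdotDr i (x y z : strat i) : sdot z (x + y) = sdot z x + sdot z y.
Proof. by rewrite sdot_sym sdotDl !(sdot_sym z). Qed.
Lemma sdotZr i a (x z : strat i) : sdot z (a *: x) = a * sdot z x.
Proof. by rewrite sdot_sym sdotZl !(sdot_sym z). Qed.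
Lemma snorm_sq i (x : strat i) : snorm x ^+ 2 = sdot x x.
Proof. by rewrite sqr_sqrtr // sdot_ge0. Qed.
Lemma snorm_ge0 i (x : strat i) : 0 <= snorm x.
Proof. exact: sqrtr_ge0. Qed.
Lemma sdot_exp i (a w : strat i) t :
  sdot (a + t *: w) (a + t *: w) = sdot a a + 2 * t * sdot a w + t ^+ 2 * sdot w w.
Proof. rewrite !sdotDl !sdotDr !sdotZl !sdotZr (sdot_sym w a); ring. Qed.

Variable v : 'I_N -> profile -> R.
Variable gradv : 'I_N -> profile -> profile.

Lemma foc i (p s : profile) (mu : R) :
  is_gradient Xs v gradv ->
  convex_set (Xs i : set (convex_lmodType 'rV[R]_(d i))) -> inX Xs p -> 0 <= mu ->
  (forall x, Xs i x -> v i (upd p x) - mu * Gdist x (s i) <= v i p - mu * Gdist (p i) (s i)) ->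
  forall x, Xs i x -> sdot (gradv i p i) (x - p i) <= mu * sdot (p i - s i) (x - p i).
Proof.
move=> hg hc hp mu0 hopt x hx.
set w := x - p i.
set A := sdot (gradv i p i) w; set B := sdot (p i - s i) w; set S := sdot w w.
have S0 : 0 <= S by apply: sdot_ge0.
set sq := Num.sqrt S.
have sq0 : 0 <= sq by apply: sqrtr_ge0.
apply/ler_addgt0Pr => e e0.
have c0 : 0 < e / (2 * (sq + 1)) by apply: divr_gt0 => //; lra.
have [dl dl0 Hd] := hg i p hp (e / (2 * (sq + 1))) c0.
pose t := Num.min 1 (Num.min (dl / (2 * (sq + 1))) (e / (mu * S + 1))).
have muS0 : 0 < mu * S + 1 by have := mulr_ge0 mu0 S0; lra.
have t0 : 0 < t by rewrite !lt_min ltr01 !divr_gt0 //; lra.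
have t1 : t <= 1 by rewrite ge_min lexx.
have t2 : t * (2 * (sq + 1)) <= dl.
  have : t <= dl / (2 * (sq + 1)) by rewrite /t !ge_min lexx orbT.
  by rewrite ler_pdivlMr //; lra.
have t3 : t * (mu * S + 1) <= e.
  have : t <= e / (mu * S + 1) by rewrite /t !ge_min lexx !orbT.
  by rewrite ler_pdivlMr.
clearbody t.
pose y := p i + t *: w.
have hy : Xs i y by apply: seg_in => //; lra.
have ey : y - p i = t *: w by rewrite /y addrAC subrr add0r.
have hq : inX Xs (upd p y) by apply: inX_upd.
have hpd : pdot (gradv i p) (psub (upd p y) p) = t * A.
  by rewrite pdot_upd // ey sdotZr.
have hpn : pnorm (psub (upd p y) p) = t * sq.
  rewrite /pnorm pdot_upd2 // ey sdotZl sdotZr mulrA -expr2 sqrtrM ?sqr_ge0 //.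
  by rewrite sqrtr_sqr ger0_norm //; lra.
have hlt : pnorm (psub (upd p y) p) < dl.
  rewrite hpn; have : t * sq < t * (2 * (sq + 1)) by rewrite ltr_pM2l //; lra.
  lra.
have := Hd _ hq hlt; rewrite hpd hpn => Hn.
have Hl : t * A - (v i (upd p y) - v i p) <= e / (2 * (sq + 1)) * (t * sq).
  apply: le_trans Hn; rewrite -normrN; apply: le_trans (ler_norm _); lra.
have Ho := hopt y hy.
have eG1 : Gdist y (s i) = 2^-1 * (sdot (p i - s i) (p i - s i) + 2 * t * B + t ^+ 2 * S).
  by rewrite /Gdist snorm_sq (_ : y - s i = (p i - s i) + t *: w) ?sdot_exp // /y addrAC.
have eG2 : Gdist (p i) (s i) = 2^-1 * sdot (p i - s i) (p i - s i) by rewrite /Gdist snorm_sq.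
rewrite eG1 eG2 in Ho.
have hcs : e / (2 * (sq + 1)) * sq <= e / 2.
  have -> : e / (2 * (sq + 1)) * sq = (e * sq) / (2 * (sq + 1)) by rewrite mulrAC.
  rewrite ler_pdivrMr; last lra.
  have : e * sq <= e * (sq + 1) by rewrite ler_pM2l //; lra.
  lra.
have hmu : mu * t * S <= e by have := mulr_ge0 mu0 S0; nra.
have h1 : t * (e / (2 * (sq + 1)) * sq) <= t * (e / 2) by rewrite ler_pM2l.
have h2 : t * (mu * t * S) <= t * e by rewrite ler_pM2l.
have : t * A <= t * (mu * B + e).
  rewrite mulrDr.
  rewrite (_ : e / (2 * (sq + 1)) * (t * sq) = t * (e / (2 * (sq + 1)) * sq)) in Hl; last by ring.
  move: Hl Ho h1 h2.
  set c := e / (2 * (sq + 1)) * sq.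
  set G0 := sdot (p i - s i) (p i - s i).
  move=> Hl Ho h1 h2.
  have : t * (mu * t * S) = mu * (t ^+ 2 * S) by ring.
  have : t * (mu * B) = mu * (t * B) by ring.
  nra.
by rewrite ler_pM2l.
Qed.

Lemma conc i (p : profile) (x : strat i) :
  is_gradient Xs v gradv -> monotone_game Xs gradv ->
  convex_set (Xs i : set (convex_lmodType 'rV[R]_(d i))) -> inX Xs p -> Xs i x ->
  v i (upd p x) - v i p <= sdot (gradv i p i) (x - p i).
Proof.
move=> hg hm hc hp hx.
set w := x - p i.
pose y (t : R) := p i + t *: w.
pose q (t : R) := upd p (y t).
pose f (t : R) := v i (q t).
pose phi (t : R) := sdot (gradv i (q t) i) w.
have hyin : forall t : R, 0 <= t -> t <= 1 -> Xs i (y t) by move=> t ? ?; apply: seg_in.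
have hqin : forall t : R, 0 <= t -> t <= 1 -> inX Xs (q t) by move=> t ? ?; apply: inX_upd => //; apply: hyin.
have q0 : q 0 = p by rewrite /q /y scale0r addr0 upd_id.
have y1 : y 1 = x by rewrite /y scale1r /w addrC subrK.
have dq : forall s t, y s - y t = (s - t) *: w.
  by move=> s t; rewrite /y opprD addrACA subrr add0r -scalerBl.
have eqq : forall t j, i != j -> q t j = p j by move=> t j ij; rewrite /q upd_out.
have qi : forall t, q t i = y t by move=> t; rewrite /q upd_in.
set S := sdot w w.
have S0 : 0 <= S by apply: sdot_ge0.
set sq := Num.sqrt S.
have sq0 : 0 <= sq by apply: sqrtr_ge0.
have Hfr : forall t : R, 0 <= t -> t <= 1 -> forall e : R, 0 < e -> exists2 dl : R, 0 < dl &
  forall s : R, 0 <= s -> s <= 1 -> `|s - t| < dl -> `|f s - f t - (s - t) * phi t| <= e * `|s - t|.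
  move=> t t0 t1 e e0.
  have c0 : 0 < e / (sq + 1) by apply: divr_gt0 => //; lra.
  have [dl dl0 Hd] := hg i (q t) (hqin t t0 t1) _ c0.
  exists (dl / (sq + 1)); first by apply: divr_gt0 => //; lra.
  move=> s s0 s1 hst.
  have hpd : pdot (gradv i (q t)) (psub (q s) (q t)) = (s - t) * phi t.
    by rewrite (@pdot_upd _ p (q t) i (y s) (eqq t)) qi dq sdotZr.
  have hpn : pnorm (psub (q s) (q t)) = `|s - t| * sq.
    rewrite /pnorm (@pdot_upd2 p (q t) i (y s) (eqq t)) qi dq.
    by rewrite sdotZl sdotZr mulrA -expr2 sqrtrM ?sqr_ge0 // sqrtr_sqr.
  have ha0 : 0 <= `|s - t| by [].
  have hlt : pnorm (psub (q s) (q t)) < dl.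
    rewrite hpn; move: hst; rewrite ltr_pdivlMr; last lra.
    nra.
  have := Hd _ (hqin s s0 s1) hlt; rewrite hpd hpn => Hn.
  apply: (le_trans Hn).
  have -> : e / (sq + 1) * (`|s - t| * sq) = e * `|s - t| * (sq / (sq + 1)) by ring.
  rewrite -[X in _ <= X]mulr1; apply: ler_wpM2l; first by rewrite mulr_ge0 //; lra.
  by rewrite ler_pdivrMr; lra.
have Hmono : forall t s : R, 0 <= t -> t <= s -> s <= 1 -> phi s <= phi t.
  move=> t s t0 ts s1.
  have := hm (q s) (q t) (hqin s (le_trans t0 ts) s1) (hqin t t0 (le_trans ts s1)).
  have -> := @sum_upd (fun j z => sdot (gradv j (q s) j - gradv j (q t) j) z) (fun j => sdot0r _) p (q t) i (y s) (eqq t).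
  rewrite qi dq sdotZr sdotBl.
  case: (eqVneq s t) => [->|st]; first by rewrite lexx.
  have : 0 < s - t by rewrite subr_gt0 lt_def st ts.
  rewrite /phi; nra.
have := onedim Hfr Hmono.
by rewrite /f /phi q0 /q y1.
Qed.
End G1.


Section G2.
Variables (R : realType) (N : nat) (d : 'I_N -> nat).
Local Notation profile := (profile R d).
Local Notation strat := (strat R d).
Variable Xs : forall i : 'I_N, set (strat i).
Arguments Xs : clear implicits.
Variable v : 'I_N -> profile -> R.
Variable gradv : 'I_N -> profile -> profile.

Definition Gp (p : profile) : profile := fun j => gradv j p j.

Lemma pdot_padd2 (a b : profile) :
  pdot (padd a b) (padd a b) = pdot a a + 2 * pdot a b + pdot b b.
Proof. rewrite !pdotDl !pdotDr (pdot_sym b a); ring. Qed.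

Lemma psub_split (a b c : profile) : psub a c = padd (psub a b) (psub b c).
Proof.
apply: functional_extensionality_dep => i; rewrite /psub /padd.
by rewrite addrA subrK.
Qed.

Lemma psub_split2 (a b c : profile) : psub a b = psub (psub a c) (psub b c).
Proof.
apply: functional_extensionality_dep => i; rewrite /psub.
by rewrite opprB addrA subrK.
Qed.

Lemma pdot_anti (x a b : profile) : pdot x (psub a b) = - pdot x (psub b a).
Proof. by rewrite !pdotBr opprB. Qed.

Lemma CSN (p q : profile) : - pdot p q <= pnorm p * pnorm q.
Proof.
have := CS (pscale (-1) p) q.
rewrite pdotZl mulN1r /pnorm pdotZl pdotZr mulrA mulrNN !mul1r.
done.
Qed.

Lemma foc_prof (mu : R) (s p y : profile) :
  is_gradient Xs v gradv -> strategy_sets_ok Xs -> 0 <= mu ->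
  perturbed_eq Xs v mu s p -> inX Xs y ->
  pdot (Gp p) (psub y p) <= mu * pdot (psub p s) (psub y p).
Proof.
move=> hg hs mu0 [hp hopt] hy.
rewrite /pdot mulr_sumr; apply: ler_sum => j _.
exact: (foc hg (hs j).2.2 hp mu0 (hopt j) (hy j)).
Qed.

Lemma foc_nash (p y : profile) :
  is_gradient Xs v gradv -> strategy_sets_ok Xs ->
  nash_eq Xs v p -> inX Xs y -> pdot (Gp p) (psub y p) <= 0.
Proof.
move=> hg hs [hp hn] hy.
rewrite /pdot; apply: sumr_le0 => j _.
have hopt : forall x, Xs j x -> v j (upd p x) - 0 * Gdist x (p j) <= v j p - 0 * Gdist (p j) (p j).
  by move=> x hx; rewrite !mul0r !subr0; exact: hn.
have := @foc _ _ _ Xs v gradv j p p 0 hg (hs j).2.2 hp (lexx 0) hopt (y j) (hy j).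
by rewrite mul0r.
Qed.

Lemma Gmono (p q : profile) : monotone_game Xs gradv -> inX Xs p -> inX Xs q ->
  pdot (psub (Gp p) (Gp q)) (psub p q) <= 0.
Proof. by move=> hm hp hq; apply: hm. Qed.

Lemma pnorm_sum_snorm (f : profile) :
  pnorm f = Num.sqrt (\sum_(i < N) (snorm (f i)) ^+ 2).
Proof. by rewrite /pnorm; congr Num.sqrt; apply: eq_bigr => i _; rewrite snorm_sq. Qed.

Lemma Glip (L : R) (p q : profile) : 0 <= L -> smooth_game Xs L gradv -> inX Xs p -> inX Xs q ->
  pnorm (psub (Gp p) (Gp q)) <= L * pnorm (psub p q).
Proof.
move=> L0 hsm hp hq.
rewrite pnorm_sum_snorm.
have := hsm p q hp hq => h.
rewrite -(@ger0_norm _ (L * pnorm (psub p q))); last by rewrite mulr_ge0 // pnorm_ge0.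
rewrite -sqrtr_sqr; apply: ler_wsqrtr.
by rewrite exprMn.
Qed.

Lemma Gbnd (zeta : R) (p : profile) :
  (forall p, inX Xs p -> Num.sqrt (\sum_(i < N) (snorm (gradv i p i)) ^+ 2) <= zeta) ->
  inX Xs p -> pnorm (Gp p) <= zeta.
Proof. by move=> hz hp; rewrite pnorm_sum_snorm; apply: hz. Qed.


Lemma pnorm_sq' (p : profile) : pdot p p = pnorm p ^+ 2.
Proof. by rewrite pnorm_sq. Qed.

Lemma three_point (mu : R) (s m ps : profile) :
  is_gradient Xs v gradv -> strategy_sets_ok Xs -> monotone_game Xs gradv -> 0 < mu ->
  perturbed_eq Xs v mu s m -> nash_eq Xs v ps ->
  pnorm (psub ps m) ^+ 2 + pnorm (psub m s) ^+ 2 <= pnorm (psub ps s) ^+ 2.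
Proof.
move=> hg hs hm mu0 hpe hn.
have hmX := hpe.1; have hpX := hn.1.
have h1 := foc_prof hg hs (ltW mu0) hpe hpX.
have h2 := foc_nash hg hs hn hmX.
have h3 := Gmono hm hmX hpX.
rewrite pdotBl in h3.
rewrite (pdot_anti (Gp m)) in h1.
have hX : 0 <= pdot (psub m s) (psub ps m).
  have : 0 <= mu * pdot (psub m s) (psub ps m) by lra.
  by rewrite pmulr_rge0.
rewrite (psub_split ps m s) -!pnorm_sq' pdot_padd2 (pdot_sym (psub ps m)).
lra.
Qed.

Lemma D_step (mu delta : R) (s s' m ps : profile) :
  is_gradient Xs v gradv -> strategy_sets_ok Xs -> monotone_game Xs gradv -> 0 < mu ->
  perturbed_eq Xs v mu s m -> nash_eq Xs v ps ->
  0 <= delta -> delta <= 1 ->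
  pnorm (psub m s') <= pnorm (psub m s) * delta ->
  pnorm (psub ps s') ^+ 2 <= (1 + 3 * delta) * pnorm (psub ps s) ^+ 2 - pnorm (psub m s) ^+ 2.
Proof.
move=> hg hs hm mu0 hpe hn d0 d1 he.
have tp := three_point hg hs hm mu0 hpe hn.
rewrite (psub_split ps m s') -pnorm_sq' pdot_padd2 !pnorm_sq'.
have cs := CS (psub ps m) (psub m s').
set P := pnorm (psub ps m) in tp cs *.
set r := pnorm (psub m s) in tp he *.
set e := pnorm (psub m s') in cs he *.
set D := pnorm (psub ps s) in tp *.
have P0 : 0 <= P by apply: pnorm_ge0.
have r0 : 0 <= r by apply: pnorm_ge0.
have e0 : 0 <= e by apply: pnorm_ge0.
have D0 : 0 <= D by apply: pnorm_ge0.
have PD : P <= D by nra.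
have rD : r <= D by nra.
have eD : e <= delta * D by nra.
have h1 : P * e <= D * (delta * D) by apply: ler_pM.
have h2 : e * e <= (delta * D) * (delta * D) by apply: ler_pM.
have h3 : delta * delta <= delta by nra.
have h4 : delta * delta * (D * D) <= delta * (D * D) by apply: ler_wpM2r => //; nra.
nra.
Qed.

Lemma quad (a b e : R) : 0 <= a -> 0 <= b -> 0 <= e ->
  a ^+ 2 <= a * b + b * e + a * e -> a <= b + 2 * e.
Proof.
move=> a0 b0 e0 h; rewrite leNgt; apply/negP => hlt.
have : 0 < (a - b - 2 * e) * (a + e) + 2 * e ^+ 2.
  have : 0 < (a - b - 2 * e) * (a + e) by apply: mulr_gt0; lra.
  have : 0 <= e ^+ 2 by apply: sqr_ge0.
  lra.
have -> : (a - b - 2 * e) * (a + e) + 2 * e ^+ 2 = a ^+ 2 - (a * b + b * e + a * e) by ring.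
lra.
Qed.

Lemma r_step (mu delta : R) (s s' m m' : profile) :
  is_gradient Xs v gradv -> strategy_sets_ok Xs -> monotone_game Xs gradv -> 0 < mu ->
  perturbed_eq Xs v mu s m -> perturbed_eq Xs v mu s' m' ->
  0 <= delta ->
  pnorm (psub m s') <= pnorm (psub m s) * delta ->
  pnorm (psub m' s') <= (1 + 2 * delta) * pnorm (psub m s).
Proof.
move=> hg hs hm mu0 hpe hpe' d0 he.
have hmX := hpe.1; have hmX' := hpe'.1.
have h1 := foc_prof hg hs (ltW mu0) hpe hmX'.
have h2 := foc_prof hg hs (ltW mu0) hpe' hmX.
have h3 := Gmono hm hmX' hmX.
rewrite pdotBl in h3.
rewrite (pdot_anti (Gp m')) (pdot_anti (psub m' s')) mulrN in h2.
have hX : pdot (psub m' s') (psub m' m) <= pdot (psub m s) (psub m' m).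
  have : mu * pdot (psub m' s') (psub m' m) <= mu * pdot (psub m s) (psub m' m) by lra.
  by rewrite ler_pM2l.
rewrite (psub_split2 m' m s') !(@pdotBr _ _ _ (psub m' s') (psub m s')) in hX.
have c1 := CS (psub m s) (psub m' s').
have c2 := CSN (psub m s) (psub m s').
have c3 := CS (psub m' s') (psub m s').
rewrite pnorm_sq' in hX.
set a := pnorm (psub m' s') in hX c1 c3 *.
set b := pnorm (psub m s) in c1 c2 he *.
set e := pnorm (psub m s') in c2 c3 he *.
have a0 : 0 <= a by apply: pnorm_ge0.
have b0 : 0 <= b by apply: pnorm_ge0.
have e0 : 0 <= e by apply: pnorm_ge0.
have : a <= b + 2 * e by apply: quad => //; lra.
nra.
Qed.
End G2.


Lemma entry_le (R : realType) n (x : 'rV[R]_n) j : `|x 0 j| <= `|x|.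
Proof.
have -> : `|x| = mx_norm x by [].
rewrite mx_normrE.
exact: (le_bigmax _ (fun ij : 'I_1 * 'I_n => `|x ij.1 ij.2|) (0, j)).
Qed.

Lemma cbound (R : realType) n (A : set 'rV[R]_n) : compact A -> exists M : R, forall x, A x -> `|x| <= M.
Proof.
move=> /compact_bounded [M [_ HM]].
exists (M + 1) => x Ax; apply: HM => //; lra.
Qed.


Section G3.
Variables (R : realType) (N : nat) (d : 'I_N -> nat).
Local Notation profile := (profile R d).
Local Notation strat := (strat R d).
Variable Xs : forall i : 'I_N, set (strat i).
Arguments Xs : clear implicits.
Variable v : 'I_N -> profile -> R.
Variable gradv : 'I_N -> profile -> profile.

Lemma Xbound : strategy_sets_ok Xs ->
  exists B : R, forall p q : profile, inX Xs p -> inX Xs q -> pnorm (psub p q) <= B.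
Proof.
move=> hs.
have hM : forall i, exists M : R, forall x, Xs i x -> `|x| <= M := fun i => cbound (hs i).2.1.
pose Mf i := projT1 (cid (hM i)).
have HM : forall i x, Xs i x -> `|x| <= Mf i := fun i => projT2 (cid (hM i)).
exists (Num.sqrt (\sum_(i < N) \sum_(j < d i) (2 * Mf i) ^+ 2)).
move=> p q hp hq; rewrite /pnorm; apply: ler_wsqrtr.
rewrite /pdot; apply: ler_sum => i _; rewrite /sdot /psub; apply: ler_sum => j _.
rewrite !mxE.
have ha := le_trans (entry_le (p i) j) (HM i _ (hp i)).
have hb := le_trans (entry_le (q i) j) (HM i _ (hq i)).
move: ha hb; rewrite !ler_norml => /andP [ha1 ha2] /andP [hb1 hb2].
nra.
Qed.

Lemma diam_ub (p q : profile) : strategy_sets_ok Xs -> inX Xs p -> inX Xs q ->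
  pnorm (psub p q) <= diamX Xs.
Proof.
move=> hs hp hq.
have [B HB] := Xbound hs.
apply: sup_upper_bound; last by exists (p, q).
split; first by exists (pnorm (psub p q)), (p, q).
exists B => z [[p' q'] [hp' hq'] <-]; exact: HB.
Qed.

Lemma inX_ex : strategy_sets_ok Xs -> exists p : profile, inX Xs p.
Proof.
move=> hs; exists (fun i => projT1 (cid ((hs i).1))) => i.
exact: projT2 (cid ((hs i).1)).
Qed.

Lemma exploit_bound (C : R) (s : profile) :
  is_gradient Xs v gradv -> monotone_game Xs gradv -> strategy_sets_ok Xs -> inX Xs s ->
  (forall y, inX Xs y -> pdot (Gp gradv s) (psub y s) <= C) -> exploit Xs v s <= C.
Proof.
move=> hg hm hs hsX hC.
have h1 : forall i (x : strat i), Xs i x -> v i (upd s x) - v i s <= C.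
  move=> i x hx.
  apply: le_trans (conc hg hm (hs i).2.2 hsX hx) _.
  have := hC _ (inX_upd hsX hx).
  by rewrite (@pdot_upd _ _ _ _ s s i x).
have hsup : forall i, has_sup [set v i (upd s x) | x in Xs i].
  move=> i; split.
    by have [x hx] := (hs i).1; exists (v i (upd s x)), x.
  exists (v i s + C) => z [x hx <-]; have := h1 i x hx; lra.
apply/ler_addgt0Pr => e e0.
pose e' := e / (N%:R + 1).
have e'0 : 0 < e' by apply: divr_gt0 => //; rewrite ltr_wpDl ?ler0n.
have hch : forall i, exists x : strat i, Xs i x /\ sup [set v i (upd s x) | x in Xs i] - e' < v i (upd s x).
  move=> i; have [z [x hx <-] hz] := sup_adherent e'0 (hsup i).
  by exists x.
pose y : profile := fun i => projT1 (cid (hch i)).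
have hy : forall i, Xs i (y i) /\ sup [set v i (upd s x) | x in Xs i] - e' < v i (upd s (y i)).
  move=> i; exact: projT2 (cid (hch i)).
have hyX : inX Xs y by move=> i; exact: (hy i).1.
have := hC y hyX.
rewrite /exploit /pdot => hC'.
apply: le_trans (_ : \sum_(i < N) (sdot (Gp gradv s i) (psub y s i) + e') <= C + e).
  apply: ler_sum => i _.
  have := (hy i).2.
  have := conc hg hm (hs i).2.2 hsX (hy i).1.
  rewrite /Gp /psub; lra.
rewrite big_split /= sumr_const card_ord.
have : e' *+ N <= e.
  rewrite -mulr_natr /e' mulrAC ler_pdivrMr; last by rewrite ltr_wpDl ?ler0n.
  rewrite ler_pM2l //; lra.
lra.
Qed.
End G3.


Section Seq.
Variable R : realType.

Lemma pow_bern (x : R) n : 0 <= x -> n%:R * x <= 1 / 2 -> (1 + x) ^+ n <= 1 + 2 * n%:R * x.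
Proof.
move=> x0; elim: n => [|n IH] hn; first by rewrite expr0 mulr0n mulr0 mul0r addr0.
rewrite exprS -addn1 natrD in hn *.
have hn' : n%:R * x <= 1 / 2 by nra.
have := IH hn' => h.
have h2 : (1 + x) * (1 + x) ^+ n <= (1 + x) * (1 + 2 * n%:R * x) by rewrite ler_pM2l //; lra.
have h3 : 2 * n%:R * x * x <= x by nra.
apply: le_trans h2 _; nra.
Qed.

Lemma seq_main (K : nat) (r E : nat -> R) (dl : R) :
  (0 < K)%N -> 0 <= dl -> K%:R * dl <= 1 / 64 ->
  (forall k, 0 <= r k) -> (forall k, 0 <= E k) ->
  (forall k, (k < K)%N -> E k.+1 <= (1 + 3 * dl) * E k - r k ^+ 2) ->
  (forall k, (k.+1 < K)%N -> r k.+1 <= (1 + 2 * dl) * r k) ->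
  K%:R * r K.-1 ^+ 2 <= 8 * E 0.
Proof.
move=> K0 dl0 Kdl r0 E0 hE hr.
have S : forall n, (n <= K)%N -> E n + \sum_(j < n) r j ^+ 2 <= (1 + 3 * dl) ^+ n * E 0.
  elim => [|n IH] hn; first by rewrite big_ord0 expr0 mul1r addr0.
  have hnK : (n < K)%N by [].
  have := IH (ltnW hnK).
  rewrite big_ord_recr /= [(1 + 3 * dl) ^+ n.+1]exprS.
  have := hE n hnK.
  have s0 : 0 <= \sum_(j < n) r j ^+ 2 by apply: sumr_ge0 => j _; apply: sqr_ge0.
  rewrite -mulrA.
  set Sm := \sum_(j < n) r j ^+ 2.
  set P := (1 + 3 * dl) ^+ n * E 0.
  move=> h1 h2.
  have : (1 + 3 * dl) * (E n + Sm) <= (1 + 3 * dl) * P by rewrite ler_pM2l //; lra.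
  have : 0 <= dl * Sm by apply: mulr_ge0.
  nra.
have KR0 : 0 <= K%:R :> R by apply: ler0n.
have pK : (1 + 3 * dl) ^+ K <= 2.
  apply: le_trans (pow_bern _ _) _; nra.
have hsum : \sum_(j < K) r j ^+ 2 <= 2 * E 0.
  have := S K (leqnn K).
  have : (1 + 3 * dl) ^+ K * E 0 <= 2 * E 0 by apply: ler_wpM2r.
  have := E0 K; lra.
have ratio : forall n j, (j + n < K)%N -> r (j + n)%N <= (1 + 2 * dl) ^+ n * r j.
  elim => [|n IH] j hjn; first by rewrite addn0 expr0 mul1r.
  rewrite addnS exprS -mulrA in hjn *.
  apply: (le_trans (hr _ hjn)).
  rewrite ler_pM2l; last lra.
  by apply: IH; apply: ltnW.
have hj : forall j : 'I_K, r K.-1 ^+ 2 <= 4 * r j ^+ 2.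
  move=> j.
  have hjK : (j + (K.-1 - j) = K.-1)%N by have := ltn_ord j; lia.
  have := ratio (K.-1 - j)%N j; rewrite hjK => /(_ ltac:(lia)) h.
  have hp : (1 + 2 * dl) ^+ (K.-1 - j) <= 2.
    apply: le_trans (pow_bern _ _) _; first lra.
      have : (K.-1 - j)%:R <= K%:R :> R by rewrite ler_nat; lia.
      nra.
    have : (K.-1 - j)%:R <= K%:R :> R by rewrite ler_nat; lia.
    nra.
  have h2 : r K.-1 <= 2 * r j.
    apply: le_trans h _; apply: ler_wpM2r => //.
  have := r0 K.-1; have := r0 j; nra.
have : \sum_(j < K) r K.-1 ^+ 2 <= \sum_(j < K) 4 * r j ^+ 2 by apply: ler_sum => j _; apply: hj.
rewrite sumr_const card_ord -mulr_sumr mulr_natl.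
move=> h; rewrite -mulr_natl; lra.
Qed.
End Seq.


Lemma delta_bound (R : realType) (c T : R) (K : nat) : 1 < c -> (1 <= K)%N ->
  Num.max (3 / ln c * ln K%:R + ln 64 / ln c) 1 <= T ->
  [/\ 0 <= c `^ (- T), c `^ (- T) <= 1 & K%:R * c `^ (- T) <= 1 / 64].
Proof.
move=> c1 K1; rewrite ge_max => /andP [hT1 hT2].
have l0 : 0 < ln c by apply: ln_gt0.
have K1R : 1 <= K%:R :> R by rewrite ler1n.
have lK : 0 <= ln (K%:R : R) by apply: ln_ge0.
have l64 : 0 <= ln (64 : R) by apply: ln_ge0; lra.
have hTl : 3 * ln (K%:R : R) + ln 64 <= T * ln c.
  have e : (3 / ln c * ln (K%:R : R) + ln 64 / ln c) * ln c = 3 * ln (K%:R : R) + ln 64.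
    by field; rewrite gt_eqF.
  by rewrite -e ler_pM2r.
have ep : c `^ (- T) = expR (- (T * ln c)) by rewrite /powR gt_eqF ?mulNr //; lra.
rewrite ep; split.
- exact: expR_ge0.
- rewrite -expR0 ler_expR; nra.
- have h1 : expR (- (T * ln c)) <= expR (- (ln (K%:R : R) + ln 64)).
    by rewrite ler_expR; lra.
  rewrite [X in _ <= X]expRN expRD !lnK ?inE ?posrE in h1; [|lra|lra].
  have KR0 : 0 < K%:R :> R by lra.
  apply: le_trans (ler_wpM2l (ltW KR0) h1) _.
  rewrite invfM mulrA mulfV ?gt_eqF // mul1r; lra.
Qed.


End Helpers.
Import Helpers.
Unset Implicit Arguments. Set Strict Implicit. Set Printing Implicit Defensive.

Lemma pnorm_sym (R : realType) (N : nat) (d : 'I_N -> nat) (a b : profile R d) :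
  pnorm (psub a b) = pnorm (psub b a).
Proof. by rewrite /pnorm !pdot_psub2 (pdot_sym b a); congr Num.sqrt; ring. Qed.
Arguments pnorm_sym {R N d}.

Theorem theorem6 (R : realType) (N : nat) (d : 'I_N -> nat)
  (Xs : forall i : 'I_N, set (strat R d i))
  (v : 'I_N -> profile R d -> R)
  (gradv : 'I_N -> profile R d -> profile R d)
  (L zeta mu c T_sigma : R) (K : nat)
  (sigma pmu : nat -> profile R d) (pstar : profile R d) :
  strategy_sets_ok Xs ->
  is_gradient Xs v gradv ->
  monotone_game Xs gradv ->
  0 <= L -> smooth_game Xs L gradv ->
  (forall p, inX Xs p ->
     Num.sqrt (\sum_(i < N) (snorm (gradv i p i)) ^+ 2) <= zeta) ->
  0 < mu ->
  (1 <= K)%N ->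
  1 < c ->
  Num.max (3 / ln c * ln K%:R + ln 64 / ln c) 1 <= T_sigma ->
  (forall k, (k <= K)%N -> inX Xs (sigma k)) ->
  (forall k, (k < K)%N -> perturbed_eq Xs v mu (sigma k) (pmu k)) ->
  (forall k, (k < K)%N ->
     pnorm (psub (pmu k) (sigma k.+1))
       <= pnorm (psub (pmu k) (sigma k)) * c `^ (- T_sigma)) ->
  nash_eq Xs v pstar ->
  exploit Xs v (sigma K)
    <= 2 * Num.sqrt 2 * ((mu + L) * diamX Xs + zeta) / Num.sqrt K%:R
       * Num.sqrt (pnorm (psub pstar (sigma 0%N))
                   * (8 * pnorm (psub pstar (sigma 0%N)) + zeta / mu)).
Proof.
move=> hs hg hm L0 hsm hz mu0 K1 c1 hT hsig hpe hclose hn.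
have [dl0 dl1 dlK] := delta_bound c1 K1 hT.
set dl := c `^ (- T_sigma) in dl0 dl1 dlK hclose.
pose r k := pnorm (psub (pmu k) (sigma k)).
pose E k := pnorm (psub pstar (sigma k)) ^+ 2.
have r0 : forall k, 0 <= r k by move=> k; apply: pnorm_ge0.
have E0 : forall k, 0 <= E k by move=> k; apply: sqr_ge0.
have hE : forall k, (k < K)%N -> E k.+1 <= (1 + 3 * dl) * E k - r k ^+ 2.
  move=> k hk; exact: (D_step hg hs hm mu0 (hpe k hk) hn dl0 dl1 (hclose k hk)).
have hr : forall k, (k.+1 < K)%N -> r k.+1 <= (1 + 2 * dl) * r k.
  move=> k hk.
  exact: (r_step hg hs hm mu0 (hpe k (ltnW hk)) (hpe k.+1 hk) dl0 (hclose k (ltnW hk))).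
have hseq := seq_main K1 dl0 dlK r0 E0 hE hr.
have [p0 hp0] := inX_ex hs.
have z0 : 0 <= zeta by apply: le_trans (hz p0 hp0); apply: sqrtr_ge0.
have D0 : 0 <= diamX Xs by apply: le_trans (diam_ub hs hp0 hp0); apply: pnorm_ge0.
set C := (mu + L) * diamX Xs + zeta.
have C0 : 0 <= C by rewrite /C; apply: addr_ge0 => //; apply: mulr_ge0 => //; lra.
have hK1 : (K.-1 < K)%N by rewrite prednK.
have hKK : K.-1.+1 = K by rewrite prednK.
have hex : exploit Xs v (sigma K) <= C * r K.-1.
  have hsK := hsig K (leqnn K).
  apply: (exploit_bound hg hm hs hsK) => y hy.
  set m := pmu K.-1; set s' := sigma K.-1; set s := sigma K.
  have hpm := hpe _ hK1.
  have hmX : inX Xs m := hpm.1.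
  have he : pnorm (psub m s) <= r K.-1 * dl by have := hclose _ hK1; rewrite hKK.
  set e := pnorm (psub m s) in he *.
  set rr := r K.-1 in he *.
  have e0 : 0 <= e by apply: pnorm_ge0.
  have err : e <= rr by apply: le_trans he _; rewrite -[X in _ <= X]mulr1; apply: ler_wpM2l => //; apply: r0.
  have -> : pdot (Gp gradv s) (psub y s) =
    pdot (psub (Gp gradv s) (Gp gradv m)) (psub y s) + pdot (Gp gradv m) (psub y m)
    + pdot (Gp gradv m) (psub m s).
    rewrite !pdotBl !pdotBr; ring.
  have ha : pdot (psub (Gp gradv s) (Gp gradv m)) (psub y s) <= (L * e) * diamX Xs.
    apply: le_trans (CS _ _) _; apply: ler_pM; rewrite ?pnorm_ge0 //.
      rewrite /e (pnorm_sym m s).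
      exact: Glip L0 hsm hsK hmX.
    exact: diam_ub.
  have hb : pdot (Gp gradv m) (psub y m) <= mu * (rr * diamX Xs).
    apply: le_trans (foc_prof hg hs (ltW mu0) hpm hy) _.
    rewrite ler_pM2l //; apply: le_trans (CS _ _) _; apply: ler_pM; rewrite ?pnorm_ge0 //.
    exact: diam_ub.
  have hc : pdot (Gp gradv m) (psub m s) <= zeta * e.
    apply: le_trans (CS _ _) _; apply: ler_wpM2r => //; exact: Gbnd hz hmX.
  have : L * e * diamX Xs <= L * rr * diamX Xs by apply: ler_wpM2r => //; apply: ler_wpM2l.
  have : zeta * e <= zeta * rr by apply: ler_wpM2l.
  rewrite /C; nra.
set D0v := pnorm (psub pstar (sigma 0%N)).
have hE0 : E 0%N = D0v ^+ 2 by [].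
rewrite hE0 in hseq.
have D0v0 : 0 <= D0v by apply: pnorm_ge0.
have zm : 0 <= zeta / mu by apply: divr_ge0 => //; apply: ltW.
set Y := D0v * (8 * D0v + zeta / mu).
have Y0 : 0 <= Y by apply: mulr_ge0 => //; lra.
have KR : 0 < K%:R :> R by rewrite ltr0n.
set B := 2 * Num.sqrt 2 / Num.sqrt K%:R * Num.sqrt Y.
have B0 : 0 <= B.
  by apply: mulr_ge0; [apply: divr_ge0; [apply: mulr_ge0 => //; apply: sqrtr_ge0|apply: sqrtr_ge0]|apply: sqrtr_ge0].
have B2 : B ^+ 2 = 8 * Y / K%:R.
  rewrite /B !exprMn exprVn.
  have s2 : Num.sqrt (2 : R) ^+ 2 = 2 by rewrite sqr_sqrtr //; lra.
  have sK : Num.sqrt (K%:R : R) ^+ 2 = K%:R by rewrite sqr_sqrtr //; apply: ltW.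
  have sY : Num.sqrt Y ^+ 2 = Y by rewrite sqr_sqrtr.
  rewrite s2 sK sY.
  field; rewrite gt_eqF //.
have hY : 8 * D0v ^+ 2 <= 8 * Y.
  rewrite /Y; have : 0 <= D0v * (zeta / mu) by apply: mulr_ge0.
  nra.
have hr2 : r K.-1 ^+ 2 <= B ^+ 2.
  rewrite B2 ler_pdivlMr // mulrC; lra.
have hrB : r K.-1 <= B by have := r0 K.-1; nra.
apply: le_trans hex _.
have -> : 2 * Num.sqrt 2 * C / Num.sqrt K%:R * Num.sqrt Y = C * B by rewrite /B; ring.
by apply: ler_wpM2l.
Qed.
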